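(* Let $V$ be a finite-dimensional complex vector space and $K\subseteq\bigwedge^2V$ a subspace. If $[a\wedge b]$ is an isolated point of $\mathbf{P}K^\perp\cap\mathrm{Gr}_2(V^\vee)$, then the line $\ell_{ab}\subseteq\mathbf{P}V^\vee$ through $[a]$ and $[b]$ is a connected component of the projectivized resonance variety $\mathbf{R}(V,K)$, and the span of $a,b$ is isotropic.
   Context: $K^\perp\subseteq\bigwedge^2V^\vee$ is the annihilator of $K$; $\mathrm{Gr}_2(V^\vee)\subseteq\mathbf{P}(\bigwedge^2V^\vee)$ is Plücker embedded. The resonance variety is $\mathcal{R}(V,K)=\{a\in V^\vee:\exists b\in V^\vee,\ a\wedge b\in K^\perp\setminus\{0\}\}\cup\{0\}$, and $\mathbf{R}(V,K)\subseteq\mathbf{P}V^\vee$ is its projectivization (the union of the lines $\ell_{ab}$ for $[a\wedge b]\in\mathbf{P}K^\perp\cap\mathrm{Gr}_2(V^\vee)$). A subspace $\overline{V}^\vee\subseteq V^\vee$ is isotropic if $\bigwedge^2\overline V^\vee\subseteq K^\perp$. *)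

(* Defs.v *)
From HB Require Import structures.
From mathcomp Require Import all_boot all_order all_algebra.
From mathcomp Require Import complex.
From mathcomp Require Import all_classical all_reals all_analysis.
Set Implicit Arguments. Unset Strict Implicit. Unset Printing Implicit Defensive.
Import Order.TTheory GRing.Theory Num.Theory.
Import numFieldTopology.Exports numFieldNormedType.Exports.

(* Euclidean (metric) topology on the complex numbers R[i], induced by the
   complex modulus; matrices/row vectors over R[i] then get the product topology. *)
#[export, non_forgetful_inheritance]
HB.instance Definition _ (R : realType) := PseudoPointedMetric.copy R[i] (R[i])^o.
Local Open Scope ring_scope.
Local Open Scope classical_set_scope.

(* Model: V^\vee = C^n = 'rV[C]_n with C = R[i] the complex numbers (R : realType).
   V is identified with C^n via the standard pairing.
   bigwedge^2 V^\vee and bigwedge^2 V are modelled as rv_skew-symmetric n x n matrices,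
   a /\ b := a^T b - b^T a  (entries a_i b_j - a_j b_i). *)

Definition rv_wedge (C : ringType) (n : nat) (a b : 'rV[C]_n) : 'M[C]_n :=
  a^T *m b - b^T *m a.

Definition rv_skew (C : ringType) (n : nat) (w : 'M[C]_n) : Prop := w^T = - w.

(* pairing of bigwedge^2 V^\vee with bigwedge^2 V: <w, k> = sum_{i<j} w_ij k_ij;
   here we use tr (w^T k) = 2 sum_{i<j} w_ij k_ij, which has the same zero set. *)
Definition rv_pair (C : ringType) (n : nat) (w k : 'M[C]_n) : C := \tr (w^T *m k).

Definition rv_Kperp (C : fieldType) (n : nat) (K : {vspace 'M[C]_n}) : set 'M[C]_n :=
  [set w | rv_skew w /\ forall k, k \in K -> rv_pair w k = 0].

Definition rv_resonance (C : fieldType) (n : nat) (K : {vspace 'M[C]_n}) : set 'rV[C]_n :=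
  [set x | exists y, rv_Kperp K (rv_wedge x y) /\ rv_wedge x y != 0] `|` [set 0].

(* the 2-plane <a,b> (affine cone over the line l_ab) *)
Definition rv_span2 (C : fieldType) (n : nat) (a b : 'rV[C]_n) : set 'rV[C]_n :=
  [set x | x \in <<[:: a; b]>>%VS].

Definition rv_isotropic (C : fieldType) (n : nat) (K : {vspace 'M[C]_n})
  (U : set 'rV[C]_n) : Prop :=
  forall x y, U x -> U y -> rv_Kperp K (rv_wedge x y).

(* Main.v *)
From Pilot Require Import Defs.
From HB Require Import structures.
From mathcomp Require Import all_boot all_order all_algebra.
From mathcomp Require Import complex.
From mathcomp Require Import all_classical all_reals all_analysis.
From mathcomp Require Import ring.
Import Order.TTheory GRing.Theory Num.Theory.
Import numFieldTopology.Exports numFieldNormedType.Exports.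
Local Open Scope ring_scope.
Local Open Scope classical_set_scope.

Module PilotAux.
Set Implicit Arguments. Unset Strict Implicit. Unset Printing Implicit Defensive.


Section Analytic.
Variable R : realType.
Local Notation C := R[i].

Lemma cvgD_C {T} {F : set_system T} {FF : Filter F} (f g : T -> C) (a b : C) :
  f t @[t --> F] --> a -> g t @[t --> F] --> b -> f t + g t @[t --> F] --> a + b.
Proof. move=> Hf Hg; exact: (@cvgD C (C^o) T F FF f g a b Hf Hg). Qed.
Lemma cvgM_C {T} {F : set_system T} {FF : Filter F} (f g : T -> C) (a b : C) :
  f t @[t --> F] --> a -> g t @[t --> F] --> b -> f t * g t @[t --> F] --> a * b.
Proof. move=> Hf Hg; exact: (@cvgM C T F FF f g a b Hf Hg). Qed.
Lemma cvgV_C {T} {F : set_system T} {FF : Filter F} (f : T -> C) (a : C) :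
  a != 0 -> f t @[t --> F] --> a -> (f t)^-1 @[t --> F] --> a^-1.
Proof. move=> a0 Hf. exact: (@cvgV C T F FF f a a0 Hf). Qed.
Lemma cvg_neq0_C {T} {F : set_system T} {FF : Filter F} (f : T -> C) (a : C) :
  a != 0 -> f t @[t --> F] --> a -> \forall t \near F, f t != 0.
Proof. move=> a0 Hf. exact: (@cvgr_neq0 C C^o T F FF f a Hf a0). Qed.
Lemma cvg_neq0_M {T} {F : set_system T} {FF : Filter F} p q (f : T -> 'M[C]_(p,q)) (a : 'M[C]_(p,q)) :
  a != 0 -> f t @[t --> F] --> a -> \forall t \near F, f t != 0.
Proof. move=> a0 Hf. exact: (@cvgr_neq0 C _ T F FF f a Hf a0). Qed.
Lemma cvgZ_M {T} {F : set_system T} {FF : Filter F} p q (s : T -> C) (f : T -> 'M[C]_(p,q)) (k : C) (a : 'M[C]_(p,q)) :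
  s t @[t --> F] --> k -> f t @[t --> F] --> a -> s t *: f t @[t --> F] --> k *: a.
Proof. move=> Hs Hf. exact: (@cvgZ C _ T F FF s f k a Hs Hf). Qed.
Lemma cvgD_M {T} {F : set_system T} {FF : Filter F} p q (f g : T -> 'M[C]_(p,q)) (a b : 'M[C]_(p,q)) :
  f t @[t --> F] --> a -> g t @[t --> F] --> b -> f t + g t @[t --> F] --> a + b.
Proof. move=> Hf Hg; exact: (@cvgD C _ T F FF f g a b Hf Hg). Qed.

Lemma mx_cvgP {T} {F : set_system T} {FF : Filter F} p q
  (f : T -> 'M[C]_(p,q)) (l : 'M[C]_(p,q)) :
  (forall i j, f t i j @[t --> F] --> l i j) -> f t @[t --> F] --> l.
Proof.
move=> H; apply/cvg_ballP => e e0.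
have H2 : \forall t \near F, forall ij : 'I_p * 'I_q, ball (l ij.1 ij.2) e (f t ij.1 ij.2).
  apply: filter_forall => -[i j]; exact: (proj1 (cvg_ballP _ _) (H i j) e e0).
apply: filterS H2 => t Ht; split => // i j; exact: (Ht (i, j)).
Qed.

Lemma mx_cvg_entry {T} {F : set_system T} {FF : Filter F} p q
  (f : T -> 'M[C]_(p,q)) (l : 'M[C]_(p,q)) i j :
  f t @[t --> F] --> l -> f t i j @[t --> F] --> l i j.
Proof.
move=> H; apply/cvg_ballP => e e0.
apply: filterS (proj1 (cvg_ballP _ _) H e e0) => t [_ Ht]; exact: Ht.
Qed.

Lemma cvg_bigsum {T} {F : set_system T} {FF : Filter F} (I : Type) (r : seq I)
  (P : pred I) (g : I -> T -> C) (l : I -> C) :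
  (forall i, g i t @[t --> F] --> l i) ->
  \sum_(i <- r | P i) g i t @[t --> F] --> \sum_(i <- r | P i) l i.
Proof.
move=> H; elim: r => [|h r IH].
- rewrite big_nil.
  have -> : (fun t => \sum_(i <- [::] | P i) g i t) = (fun=> 0).
    by apply/funext => t; rewrite big_nil.
  exact: cvg_cst.
- rewrite big_cons.
  have -> : (fun t => \sum_(i <- h :: r | P i) g i t) =
   (fun t => if P h then g h t + \sum_(i <- r | P i) g i t else \sum_(i <- r | P i) g i t).
    by apply/funext => t; rewrite big_cons.
  case Ph: (P h); last exact: IH.
  exact: (cvgD_C (H h) IH).
Qed.

Lemma cvg_bigprod {T} {F : set_system T} {FF : Filter F} (I : Type) (r : seq I)
  (P : pred I) (g : I -> T -> C) (l : I -> C) :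
  (forall i, g i t @[t --> F] --> l i) ->
  \prod_(i <- r | P i) g i t @[t --> F] --> \prod_(i <- r | P i) l i.
Proof.
move=> H; elim: r => [|h r IH].
- rewrite big_nil.
  have -> : (fun t => \prod_(i <- [::] | P i) g i t) = (fun=> 1).
    by apply/funext => t; rewrite big_nil.
  exact: cvg_cst.
- rewrite big_cons.
  have -> : (fun t => \prod_(i <- h :: r | P i) g i t) =
   (fun t => if P h then g h t * \prod_(i <- r | P i) g i t else \prod_(i <- r | P i) g i t).
    by apply/funext => t; rewrite big_cons.
  case Ph: (P h); last exact: IH.
  exact: (cvgM_C (H h) IH).
Qed.

Lemma cvg_mulmx {T} {F : set_system T} {FF : Filter F} p q r
  (f : T -> 'M[C]_(p,q)) (g : T -> 'M[C]_(q,r)) (lf : 'M[C]_(p,q)) (lg : 'M[C]_(q,r)) :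
  f t @[t --> F] --> lf -> g t @[t --> F] --> lg -> f t *m g t @[t --> F] --> lf *m lg.
Proof.
move=> Hf Hg; apply: mx_cvgP => i j.
have -> : (fun t => (f t *m g t) i j) = (fun t => \sum_k f t i k * g t k j).
  by apply/funext => t; rewrite mxE.
rewrite mxE; apply: cvg_bigsum => k; apply: cvgM_C; exact: mx_cvg_entry.
Qed.

Lemma cvg_trmx {T} {F : set_system T} {FF : Filter F} p q
  (f : T -> 'M[C]_(p,q)) (lf : 'M[C]_(p,q)) :
  f t @[t --> F] --> lf -> (f t)^T @[t --> F] --> lf^T.
Proof.
move=> Hf; apply: mx_cvgP => i j.
have -> : (fun t => (f t)^T i j) = (fun t => f t j i) by apply/funext => t; rewrite mxE.
rewrite mxE; exact: mx_cvg_entry.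
Qed.

Lemma cvg_det {T} {F : set_system T} {FF : Filter F} p
  (f : T -> 'M[C]_p) (lf : 'M[C]_p) :
  f t @[t --> F] --> lf -> \det (f t) @[t --> F] --> \det lf.
Proof.
move=> Hf; rewrite /determinant.
apply: cvg_bigsum => s; apply: cvgM_C; first exact: cvg_cst.
apply: cvg_bigprod => i; exact: mx_cvg_entry.
Qed.

Lemma cvg_adj {T} {F : set_system T} {FF : Filter F} p
  (f : T -> 'M[C]_p) (lf : 'M[C]_p) :
  f t @[t --> F] --> lf -> \adj (f t) @[t --> F] --> \adj lf.
Proof.
move=> Hf; apply: mx_cvgP => i j.
have -> : (fun t => (\adj (f t)) i j) = (fun t => cofactor (f t) j i).
  by apply/funext => t; rewrite mxE.
rewrite mxE /cofactor.
apply: cvgM_C; first exact: cvg_cst.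
apply: cvg_det; apply: mx_cvgP => k l.
have -> : (fun t => row' j (col' i (f t)) k l) = (fun t => f t (lift j k) (lift i l)).
  by apply/funext => t; rewrite !mxE.
rewrite !mxE; exact: mx_cvg_entry.
Qed.

End Analytic.


Section Alg.
Variable C : numFieldType.
Variable n : nat.
Implicit Types (u v w a b x c y z : 'rV[C]_n) (s t : C).

Lemma wedgeE u v i j : rv_wedge u v i j = u 0 i * v 0 j - v 0 i * u 0 j.
Proof. by rewrite /rv_wedge !mxE !big_ord1 !mxE. Qed.

Lemma wedge_lin u u' v s t :
  rv_wedge (s *: u + t *: u') v = s *: rv_wedge u v + t *: rv_wedge u' v.
Proof. apply/matrixP => i j; rewrite !(wedgeE, mxE); ring. Qed.

Lemma wedge_linr u v v' s t :
  rv_wedge u (s *: v + t *: v') = s *: rv_wedge u v + t *: rv_wedge u v'.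
Proof. apply/matrixP => i j; rewrite !(wedgeE, mxE); ring. Qed.

Lemma wedgeC u v : rv_wedge v u = - rv_wedge u v.
Proof. apply/matrixP => i j; rewrite !(wedgeE, mxE); ring. Qed.

Lemma wedgevv u : rv_wedge u u = 0.
Proof. apply/matrixP => i j; rewrite !(wedgeE, mxE); ring. Qed.

Lemma wedgeZl u v s : rv_wedge (s *: u) v = s *: rv_wedge u v.
Proof. apply/matrixP => i j; rewrite !(wedgeE, mxE); ring. Qed.

Lemma wedgeZr u v s : rv_wedge u (s *: v) = s *: rv_wedge u v.
Proof. apply/matrixP => i j; rewrite !(wedgeE, mxE); ring. Qed.

Lemma wedgeDr u v v' : rv_wedge u (v + v') = rv_wedge u v + rv_wedge u v'.
Proof. apply/matrixP => i j; rewrite !(wedgeE, mxE); ring. Qed.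

Lemma wedgeBr u v v' : rv_wedge u (v - v') = rv_wedge u v - rv_wedge u v'.
Proof. apply/matrixP => i j; rewrite !(wedgeE, mxE); ring. Qed.

Lemma wedge_skew u v : rv_skew (rv_wedge u v).
Proof. apply/matrixP => i j; rewrite !(wedgeE, mxE); ring. Qed.

Variable K : {vspace 'M[C]_n}.
Hypothesis Kskew : forall k, k \in K -> rv_skew k.

Lemma Kperp_lin (w1 w2 : 'M[C]_n) (s t : C) : rv_Kperp K w1 -> rv_Kperp K w2 ->
  rv_Kperp K (s *: w1 + t *: w2).
Proof.
move=> [s1 p1] [s2 p2]; split.
  by rewrite /rv_skew linearD !linearZ /= s1 s2 opprD -!scalerN.
move=> k kK; rewrite /rv_pair linearD !linearZ /= mulmxDl -!scalemxAl.
by rewrite mxtraceD !mxtraceZ /= -/(rv_pair w1 k) -/(rv_pair w2 k) p1 // p2 // !mulr0 addr0.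
Qed.

Lemma Kperp0 : rv_Kperp K 0.
Proof. split; first by rewrite /rv_skew trmx0 oppr0. by move=> k _; rewrite /rv_pair trmx0 mul0mx mxtrace0. Qed.

Lemma KperpZ (w : 'M[C]_n) (s : C) : rv_Kperp K w -> rv_Kperp K (s *: w).
Proof. move=> H; have := Kperp_lin s 0 H Kperp0; by rewrite scale0r addr0. Qed.

Definition Bk (k : 'M[C]_n) u v : C := \tr (u *m k *m v^T).

Lemma tr_neg p (A : 'M[C]_p) : \tr (- A) = - \tr A.
Proof. by rewrite -scaleN1r mxtraceZ mulN1r. Qed.

Lemma pair_wedge u v k : k \in K ->
  rv_pair (rv_wedge u v) k = 2%:R * Bk k u v.
Proof.
move=> kK; have sk := Kskew kK.
have e1 : \tr ((u^T *m v)^T *m k) = Bk k u v.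
  by rewrite /Bk trmx_mul trmxK -(mulmxA (v^T)) (mxtrace_mulC (v^T)).
have e2 : \tr ((v^T *m u)^T *m k) = Bk k v u.
  by rewrite /Bk trmx_mul trmxK -(mulmxA (u^T)) (mxtrace_mulC (u^T)).
have e3 : Bk k v u = - Bk k u v.
  rewrite /Bk -mxtrace_tr !trmx_mul trmxK sk mulNmx mulmxN mulmxA.
  exact: tr_neg.
rewrite /rv_pair /rv_wedge.
have -> : (u^T *m v - v^T *m u)^T = (u^T *m v)^T - (v^T *m u)^T.
  by rewrite linearB.
rewrite mulmxBl mxtraceD tr_neg e1 e2 e3.
rewrite mulr2n mulrDl mul1r; ring.
Qed.

Lemma Kperp_wedgeP u v :
  rv_Kperp K (rv_wedge u v) <-> forall k, k \in K -> Bk k u v = 0.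
Proof.
split.
  move=> [_ H] k kK; have := H k kK; rewrite pair_wedge // => /eqP.
  by rewrite mulf_eq0 pnatr_eq0 /= => /eqP.
move=> H; split; first exact: wedge_skew.
by move=> k kK; rewrite pair_wedge // H // mulr0.
Qed.

Lemma wedge0l v : rv_wedge 0 v = 0.
Proof. apply/matrixP => i j; rewrite !(wedgeE, mxE); ring. Qed.

Lemma wedge0r v : rv_wedge v 0 = 0.
Proof. apply/matrixP => i j; rewrite !(wedgeE, mxE); ring. Qed.

Definition inS (a b v : 'rV[C]_n) := exists s t, v = s *: a + t *: b.

Lemma span2P a b v : v \in <<[:: a; b]>>%VS <-> inS a b v.
Proof.
rewrite span_cons span_seq1; split.
  case/memv_addP => x /vlineP[s ->] [y /vlineP[t ->] ->]; by exists s, t.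
move=> [s [t ->]]; apply/memv_addP; exists (s *: a); first by apply/vlineP; exists s.
by exists (t *: b) => //; apply/vlineP; exists t.
Qed.

Lemma inS_lin a b v v' s t : inS a b v -> inS a b v' -> inS a b (s *: v + t *: v').
Proof.
move=> [s1 [t1 ->]] [s2 [t2 ->]]; exists (s * s1 + t * s2), (s * t1 + t * t2).
by apply/rowP => i; rewrite !mxE; ring.
Qed.

Lemma indep a b s t : rv_wedge a b != 0 -> s *: a + t *: b = 0 -> s = 0 /\ t = 0.
Proof.
move=> ab E; split.
  have := congr1 (fun v => rv_wedge v b) E; rewrite /= wedge_lin wedgevv scaler0 addr0 wedge0l.
  by move/eqP; rewrite scaler_eq0 (negbTE ab) orbF => /eqP.
have := congr1 (fun v => rv_wedge a v) E; rewrite /= wedge_linr wedgevv scaler0 add0r wedge0r.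
by move/eqP; rewrite scaler_eq0 (negbTE ab) orbF => /eqP.
Qed.

Lemma rows_span a b u v t p q : rv_wedge u v = t *: rv_wedge a b ->
  rv_wedge a b p q != 0 -> t != 0 -> inS a b u.
Proof.
move=> E d0 t0.
have key l : rv_wedge u v p q * u 0 l = u 0 q * rv_wedge u v p l - u 0 p * rv_wedge u v q l.
  by rewrite !wedgeE; ring.
have E' k l : rv_wedge u v k l = t * (a 0 k * b 0 l - b 0 k * a 0 l) by rewrite E mxE wedgeE.
have td0 : t * (a 0 p * b 0 q - b 0 p * a 0 q) != 0 by rewrite mulf_neq0 // -wedgeE.
exists ((t * (a 0 p * b 0 q - b 0 p * a 0 q))^-1 * (- u 0 q * t * b 0 p + u 0 p * t * b 0 q)).
exists ((t * (a 0 p * b 0 q - b 0 p * a 0 q))^-1 * (u 0 q * t * a 0 p - u 0 p * t * a 0 q)).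
apply/rowP => l; rewrite !mxE.
have := key l; rewrite !E' => {}key.
apply: (mulfI td0); rewrite key; field; move: td0; rewrite mulf_eq0 negb_or andbC; exact.
Qed.

Lemma nz_row (x : 'rV[C]_n) : x != 0 -> exists i, x 0 i != 0.
Proof.
move=> x0; case: (pickP (fun i => x 0 i != 0)) => [i xi | H]; first by exists i.
case/eqP: x0; apply/rowP => i; rewrite mxE; have := H i; by move/negbFE/eqP.
Qed.

Lemma nz_mx p' q' (W : 'M[C]_(p', q')) : W != 0 -> exists i j, W i j != 0.
Proof.
move=> W0; case: (pickP (fun ij : 'I_p' * 'I_q' => W ij.1 ij.2 != 0)) => [[i j] xi | H].
  by exists i, j.
case/eqP: W0; apply/matrixP => i j; rewrite mxE; have := H (i, j); by move/negbFE/eqP.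
Qed.

Lemma line_span x c : rv_wedge x c = 0 -> x != 0 -> exists l, c = l *: x.
Proof.
move=> E /nz_row [i xi]; exists (c 0 i / x 0 i); apply/rowP => l; rewrite !mxE.
have : rv_wedge x c i l = 0 by rewrite E mxE.
rewrite wedgeE => e.
apply: (mulfI xi). 
have -> : x 0 i * c 0 l = c 0 i * x 0 l by apply/eqP; rewrite -subr_eq0 e.
by field.
Qed.

Lemma wedge_y1 a b s t : s != 0 -> rv_wedge (s *: a + t *: b) (s^-1 *: b) = rv_wedge a b.
Proof. move=> s0; apply/matrixP => i j; rewrite !(wedgeE, mxE); by field. Qed.

Lemma wedge_y2 a b t : t != 0 -> rv_wedge (0 *: a + t *: b) ((- t^-1) *: a) = rv_wedge a b.
Proof. move=> t0; apply/matrixP => i j; rewrite !(wedgeE, mxE); by field. Qed.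

Lemma solve_scal (W X : 'M[C]_n) e t : e != 0 -> W + e *: X = t *: W ->
  X = (e^-1 * (t - 1)) *: W.
Proof.
move=> e0 H; rewrite -scalerA scalerBl scale1r -H addrC addKr scalerA mulVf //.
by rewrite scale1r.
Qed.

Lemma pq_zero_span a b v p q : inS a b v -> v 0 p = 0 -> v 0 q = 0 ->
  rv_wedge a b p q != 0 -> v = 0.
Proof.
move=> [s [t ->]] vp vq d0; rewrite !mxE in vp vq.
have es : s * rv_wedge a b p q = 0.
  rewrite wedgeE; have -> : s * (a 0 p * b 0 q - b 0 p * a 0 q) =
    b 0 q * (s * a 0 p + t * b 0 p) - b 0 p * (s * a 0 q + t * b 0 q) by ring.
  by rewrite vp vq !mulr0 subrr.
have et : t * rv_wedge a b p q = 0.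
  rewrite wedgeE; have -> : t * (a 0 p * b 0 q - b 0 p * a 0 q) =
    a 0 p * (s * a 0 q + t * b 0 q) - a 0 q * (s * a 0 p + t * b 0 p) by ring.
  by rewrite vp vq !mulr0 subrr.
move/eqP: es; rewrite mulf_eq0 (negbTE d0) orbF => /eqP ->.
move/eqP: et; rewrite mulf_eq0 (negbTE d0) orbF => /eqP ->.
by rewrite !scale0r addr0.
Qed.

Lemma delta_nz (P : 'rV[C]_n -> Prop) u z p q :
  (forall c, P c -> c 0 p = 0 -> c 0 q = 0 -> c = 0) ->
  (forall s t, P (s *: u + t *: z)) -> rv_wedge u z != 0 -> u != 0 ->
  u 0 p * z 0 q - z 0 p * u 0 q != 0.
Proof.
move=> NK Pc uz u0; apply/negP => /eqP d0.
have c1 : z 0 p *: u + (- u 0 p) *: z = 0.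
  apply: NK; first exact: Pc.
    by rewrite !mxE; ring.
  rewrite !mxE; have -> : z 0 p * u 0 q + - u 0 p * z 0 q = - (u 0 p * z 0 q - z 0 p * u 0 q) by ring.
  by rewrite d0 oppr0.
have c2 : z 0 q *: u + (- u 0 q) *: z = 0.
  apply: NK; first exact: Pc.
    rewrite !mxE; have -> : z 0 q * u 0 p + - u 0 q * z 0 p = (u 0 p * z 0 q - z 0 p * u 0 q) by ring.
    by rewrite d0.
  by rewrite !mxE; ring.
have [_ up] := indep uz c1; have [_ uq] := indep uz c2.
have : u = 0.
  apply: NK.
    by have := Pc 1 0; rewrite scale1r scale0r addr0.
    by apply/eqP; rewrite -oppr_eq0 up.
  by apply/eqP; rewrite -oppr_eq0 uq.
by move/eqP; rewrite (negbTE u0).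
Qed.

Definition cr_al u z y p q := (y 0 p * z 0 q - z 0 p * y 0 q) / (u 0 p * z 0 q - z 0 p * u 0 q).
Definition cr_be u z y p q := (u 0 p * y 0 q - y 0 p * u 0 q) / (u 0 p * z 0 q - z 0 p * u 0 q).

Lemma cramer u z y p q : u 0 p * z 0 q - z 0 p * u 0 q != 0 ->
  (cr_al u z y p q *: u + cr_be u z y p q *: z) 0 p = y 0 p /\ (cr_al u z y p q *: u + cr_be u z y p q *: z) 0 q = y 0 q.
Proof. move=> d0; rewrite !mxE /cr_al /cr_be; split; by field. Qed.

Definition gfun a b p q v := rv_wedge a b p q *: v - rv_wedge v b p q *: a - rv_wedge a v p q *: b.

Lemma gfun_inS a b p q v : inS a b v -> gfun a b p q v = 0.
Proof. move=> [s [t ->]]; apply/rowP => i; rewrite /gfun !(mxE, wedgeE); ring. Qed.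

Lemma gfun_zero a b p q v : rv_wedge a b p q != 0 -> gfun a b p q v = 0 -> inS a b v.
Proof.
move=> d0 /rowP H; rewrite /gfun in H.
move: d0 H; set d := rv_wedge a b p q; set w1 := rv_wedge v b p q; set w2 := rv_wedge a v p q.
move=> d0 H; exists (w1 / d), (w2 / d); apply/rowP => i; have := H i; rewrite !mxE => Hi.
have e : d * v 0 i = w1 * a 0 i + w2 * b 0 i.
  by apply/eqP; rewrite -subr_eq0; apply/eqP; rewrite -Hi; ring.
apply: (mulfI d0); rewrite e; field; exact: d0.
Qed.

Definition sel (p q : 'I_n) (j : 'I_2) : 'I_n := if j == ord0 then p else q.
Definition E2 (p q : 'I_n) : 'M[C]_(n, 2) := \matrix_(i, j) ((i == sel p q j)%:R).

Lemma mulE2 p q v j : (v *m E2 p q) 0 j = v 0 (sel p q j).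
Proof.
rewrite mxE (bigD1 (sel p q j)) //= mxE eqxx mulr1 big1 ?addr0 // => i /negbTE ij.
by rewrite mxE ij mulr0.
Qed.

Lemma mulE2_0 p q v : v 0 p = 0 -> v 0 q = 0 -> v *m E2 p q = 0.
Proof.
move=> vp vq; apply/rowP => j; rewrite mulE2 mxE /sel; by case: ifP.
Qed.

Lemma mulE2_p p q v : v *m E2 p q = 0 -> v 0 p = 0 /\ v 0 q = 0.
Proof.
move=> H; have h0 := mulE2 p q v (@Ordinal 2 0 isT); have h1 := mulE2 p q v (@Ordinal 2 1 isT).
rewrite H mxE /sel /= in h0; rewrite H mxE /sel /= in h1; split; [by rewrite -h0 | by rewrite -h1].
Qed.

Lemma wedge_inS a b x y : inS a b x -> inS a b y -> exists mu, rv_wedge x y = mu *: rv_wedge a b.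
Proof.
move=> [s [t ->]] [s' [t' ->]]; exists (s * t' - t * s').
apply/matrixP => i j; rewrite !(wedgeE, mxE); ring.
Qed.

Lemma seg_nz1 a b s t (r : C) : rv_wedge a b != 0 -> t != 0 ->
  a + r *: ((s *: a + t *: b) - a) != 0.
Proof.
move=> ab t0; apply/negP => /eqP H.
have H' : (1 + r * (s - 1)) *: a + (r * t) *: b = 0.
  rewrite -H; apply/rowP => i; rewrite !mxE; ring.
have [c1 c2] := indep ab H'.
move/eqP: c2; rewrite mulf_eq0 (negbTE t0) orbF => /eqP r0.
by move: c1; rewrite r0 mul0r addr0 => /eqP; rewrite oner_eq0.
Qed.

Lemma seg_nz2 a b (r : C) : rv_wedge a b != 0 -> a + r *: (b - a) != 0.
Proof.
move=> ab; apply/negP => /eqP H.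
have H' : (1 - r) *: a + r *: b = 0.
  rewrite -H; apply/rowP => i; rewrite !mxE; ring.
have [c1 c2] := indep ab H'.
by move: c1; rewrite c2 subr0 => /eqP; rewrite oner_eq0.
Qed.

Lemma seg_nz3 a b s (r : C) : rv_wedge a b != 0 -> s != 0 ->
  b + r *: ((s *: a + 0 *: b) - b) != 0.
Proof.
move=> ab s0; apply/negP => /eqP H.
have H' : (r * s) *: a + (1 - r) *: b = 0.
  rewrite -H; apply/rowP => i; rewrite !mxE; ring.
have [c1 c2] := indep ab H'.
move/eqP: c1; rewrite mulf_eq0 (negbTE s0) orbF => /eqP r0.
by move: c2; rewrite r0 subr0 => /eqP; rewrite oner_eq0.
Qed.

Definition kb := vbasis K.
Definition Um (u : 'rV[C]_n) : 'M[C]_(n, \dim K) := \matrix_(i, j) (u *m kb`_j) 0 i.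

Lemma Bk_entry k u v : Bk k u v = \sum_i (u *m k) 0 i * v 0 i.
Proof.
rewrite /Bk /mxtrace big_ord1 [LHS]mxE; apply: eq_bigr => i _; by rewrite [v^T _ _]mxE.
Qed.

Lemma Um_entry v u j : (v *m Um u) 0 j = Bk kb`_j u v.
Proof.
rewrite Bk_entry mxE; apply: eq_bigr => i _; by rewrite mxE mulrC.
Qed.

Lemma Bk_lin u v (I : finType) (c : I -> C) (ks : I -> 'M[C]_n) :
  Bk (\sum_i c i *: ks i) u v = \sum_i c i * Bk (ks i) u v.
Proof.
rewrite /Bk mulmx_sumr mulmx_suml linear_sum; apply: eq_bigr => i _.
by rewrite -scalemxAr -scalemxAl linearZ.
Qed.

Lemma Kperp_Um u v : rv_Kperp K (rv_wedge u v) <-> v *m Um u = 0.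
Proof.
rewrite Kperp_wedgeP; split.
  move=> H; apply/rowP => j; rewrite Um_entry mxE; apply: H.
  apply: vbasis_mem; apply: mem_nth; by rewrite size_tuple.
move=> H k kK; rewrite (coord_vbasis kK) Bk_lin; apply: big1 => j _.
by rewrite -/kb -Um_entry H mxE mulr0.
Qed.

End Alg.


Section Analytic2.
Variable R : realType.
Local Notation C := R[i].

Lemma cvgN_M {T} {F : set_system T} {FF : Filter F} p q (f : T -> 'M[C]_(p,q)) (a : 'M[C]_(p,q)) :
  f t @[t --> F] --> a -> - f t @[t --> F] --> - a.
Proof. move=> Hf; exact: (@cvgN C _ T F FF f a Hf). Qed.
Lemma cvgB_C {T} {F : set_system T} {FF : Filter F} (f g : T -> C) (a b : C) :
  f t @[t --> F] --> a -> g t @[t --> F] --> b -> f t - g t @[t --> F] --> a - b.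
Proof. move=> Hf Hg; exact: (@cvgB C (C^o) T F FF f g a b Hf Hg). Qed.

Lemma cvg_row_mx {T} {F : set_system T} {FF : Filter F} p q1 q2
  (f : T -> 'M[C]_(p,q1)) (g : T -> 'M[C]_(p,q2)) (lf : 'M[C]_(p,q1)) (lg : 'M[C]_(p,q2)) :
  f t @[t --> F] --> lf -> g t @[t --> F] --> lg -> row_mx (f t) (g t) @[t --> F] --> row_mx lf lg.
Proof.
move=> Hf Hg; apply: mx_cvgP => i j; rewrite -(splitK j); case: (fintype.split j) => k /=.
  have -> : (fun t => row_mx (f t) (g t) i (lshift q2 k)) = (fun t => f t i k).
    by apply/funext => t; rewrite row_mxEl.
  rewrite row_mxEl; exact: mx_cvg_entry.
have -> : (fun t => row_mx (f t) (g t) i (rshift q1 k)) = (fun t => g t i k).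
  by apply/funext => t; rewrite row_mxEr.
rewrite row_mxEr; exact: mx_cvg_entry.
Qed.

Lemma cvg_wedge {T} {F : set_system T} {FF : Filter F} n
  (f g : T -> 'rV[C]_n) (lf lg : 'rV[C]_n) :
  f t @[t --> F] --> lf -> g t @[t --> F] --> lg ->
  rv_wedge (f t) (g t) @[t --> F] --> rv_wedge lf lg.
Proof.
move=> Hf Hg; apply: mx_cvgP => i j.
have -> : (fun t => rv_wedge (f t) (g t) i j) =
   (fun t => f t 0 i * g t 0 j - g t 0 i * f t 0 j).
  by apply/funext => t; rewrite wedgeE.
rewrite wedgeE; apply: cvgB_C; apply: cvgM_C; exact: mx_cvg_entry.
Qed.

Lemma ball_nz (P : C -> Prop) : (\forall e \near (0 : C), P e) -> exists e : C, e != 0 /\ P e.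
Proof.
move=> /nbhs_ballP [e e0 He]; exists (e / 2); split.
  by rewrite mulf_neq0 // ?gt_eqF // invr_eq0 pnatr_eq0.
apply: He; rewrite /ball /= sub0r normrN ger0_norm; last by rewrite divr_ge0 // ltW.
by rewrite ltr_pdivrMr // ltr_pMr // ltr1n.
Qed.

Lemma cont_RC : continuous (fun r : R => (r%:C)%C).
Proof.
move=> r0; apply/cvg_ballP => e e0.
have eR : e = ((complex.Re e)%:C)%C.
  by move: e0; rewrite ltcE /= => /andP[/eqP He _]; case: e He => x y /= ->.
have e0' : 0 < complex.Re e by move: e0; rewrite ltcE /= => /andP[_].
exists (complex.Re e) => // r /= H; rewrite /ball /=.
rewrite eR -rmorphB /= normc_def /= expr0n addr0 /= sqrtr_sqr ltcR.
exact: H.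
Qed.

Lemma ccst (U V : topologicalType) (x : V) (c : U) : (fun=> c) @ nbhs x --> c.
Proof. exact: cvg_cst. Qed.

End Analytic2.


Section Main.
Variable R : realType.
Local Notation C := R[i].
Variables (n : nat) (K : {vspace 'M[C]_n}) (a b : 'rV[C]_n).
Hypothesis Kskew : forall k, k \in K -> rv_skew k.
Hypothesis HabK : rv_Kperp K (rv_wedge a b).
Hypothesis Hab : rv_wedge a b != 0.
Definition Piso (w : 'M[C]_n) := (rv_Kperp K w /\ (exists c d, w = rv_wedge c d) /\ w != 0) ->
      exists t : C, w = t *: rv_wedge a b.
Hypothesis Hiso : \forall w \near rv_wedge a b, Piso w.
Variables (p q : 'I_n).
Hypothesis Hpq : rv_wedge a b p q != 0.

Local Notation inS := (inS a b).

Lemma exists_y x : inS x -> x != 0 -> exists2 y, inS y & rv_wedge x y = rv_wedge a b.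
Proof.
move=> [s [t ->]] x0; have [s0|s0] := eqVneq s 0.
  have t0 : t != 0 by apply: contra x0 => /eqP ->; rewrite s0 !scale0r addr0.
  exists ((- t^-1) *: a); first by exists (- t^-1), 0; rewrite scale0r addr0.
  rewrite s0; exact: wedge_y2.
exists (s^-1 *: b); first by exists 0, s^-1; rewrite scale0r add0r.
exact: wedge_y1.
Qed.

Lemma eps_lemma x y c : inS x -> x != 0 -> rv_wedge x y = rv_wedge a b ->
  rv_Kperp K (rv_wedge x c) -> inS c.
Proof.
move=> Sx x0 Exy Kc.
pose phi (e : C) := rv_wedge a b + e *: rv_wedge x c.
have cphi : phi e @[e --> (0 : C)] --> rv_wedge a b.
  rewrite -[X in _ --> X]addr0 -(scale0r (rv_wedge x c)).
  exact: (cvgD_M (F := nbhs (0:C)) (cvg_cst (rv_wedge a b)) (cvgZ_M (F := nbhs (0:C)) cvg_id (cvg_cst (rv_wedge x c)))).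
have H1 : \forall e \near (0 : C), Piso (phi e) := cphi _ Hiso.
have H2 : \forall e \near (0:C), phi e != 0 := @cvg_neq0_M _ _ _ (nbhs_filter (0:C)) _ _ _ _ Hab cphi.
have [e [e0 [He1 He2]]] := ball_nz (filterI H1 H2).
have [t Ht] : exists t : C, phi e = t *: rv_wedge a b.
  apply: He1; split.
    have := Kperp_lin 1 e HabK Kc; rewrite scale1r /phi; exact.
  split => //; exists x, (y + e *: c).
  by rewrite wedgeDr wedgeZr Exy.
have Ec : rv_wedge x c = (e^-1 * (t - 1)) *: rv_wedge a b.
  exact: solve_scal e0 Ht.
have [mu0|mu0] := eqVneq (e^-1 * (t - 1)) 0.
  move: Ec; rewrite mu0 scale0r => /line_span /(_ x0) [l ->].
  by have := inS_lin l 0 Sx Sx; rewrite scale0r addr0.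
have Ecx : rv_wedge c x = (- (e^-1 * (t - 1))) *: rv_wedge a b.
  by rewrite wedgeC Ec scaleNr.
have mu0' : - (e^-1 * (t - 1)) != 0 by rewrite oppr_eq0.
exact: (rows_span Ecx Hpq mu0').
Qed.

Definition Y (u : 'rV[C]_n) := row_mx (Um K u) (E2 C p q).

Lemma open_lemma x : inS x -> x != 0 ->
  \forall u \near x, (rv_resonance K u /\ u != 0) -> inS u.
Proof.
move=> Sx x0.
have [y Sy Exy] := exists_y Sx x0.
have Yinj (v : 'rV[C]_n) : v *m Y x = 0 -> v = 0.
  rewrite /Y mul_mx_row => /eqP; rewrite row_mx_eq0 => /andP[/eqP vU /eqP vE].
  have [vp vq] := @mulE2_p _ _ p q v vE.
  have Sv : inS v by apply: (eps_lemma Sx x0 Exy); apply/(Kperp_Um Kskew).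
  exact: pq_zero_span Sv vp vq Hpq.
have rf : row_free (Y x).
  rewrite -kermx_eq0; apply/negPn/negP => /rowV0Pn [v /sub_kermxP vY v0].
  by move: v0; rewrite (Yinj v vY) eqxx.
have [Z HZ] := row_freeP rf.
pose G u := Y u *m Z.
pose gd u := \det (G u).
pose r u := row_mx (- (y *m Um K u)) (0 : 'rV[C]_2).
pose D u := (gd u)^-1 *: (r u *m Z *m \adj (G u)).
pose Wf u := rv_wedge u (y + D u).
have cUm : Um K u @[u --> x] --> Um K x.
  apply: (@mx_cvgP _ _ _ (nbhs_filter x)) => i j.
  have -> : (fun u => Um K u i j) = (fun u => (u *m (kb K)`_j) 0 i).
    by apply/funext => u; rewrite mxE.
  rewrite mxE; apply: (@mx_cvg_entry _ _ _ (nbhs_filter x)); exact: (@cvg_mulmx _ _ _ (nbhs_filter x) _ _ _ _ _ _ _ cvg_id (cvg_cst _)).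
have cY : Y u @[u --> x] --> Y x := @cvg_row_mx _ _ _ (nbhs_filter x) _ _ _ _ _ _ _ cUm (@ccst _ _ x (E2 C p q)).
have cG : G u @[u --> x] --> (1%:M : 'M[C]_n) by rewrite -HZ; exact: (@cvg_mulmx _ _ _ (nbhs_filter x) _ _ _ _ _ _ _ cY (@ccst _ _ x Z)).
have cgd : gd u @[u --> x] --> (1 : C) by rewrite -(det1 C n); exact: (@cvg_det _ _ _ (nbhs_filter x) _ _ _ cG).
have yU : y *m Um K x = 0 by apply/(Kperp_Um Kskew); rewrite Exy.
have cr : r u @[u --> x] --> (0 : 'rV[C]_(\dim K + 2)).
  have -> : (0 : 'rV[C]_(\dim K + 2)) = row_mx (- (y *m Um K x)) 0 by rewrite yU oppr0 row_mx0.
  apply: (@cvg_row_mx _ _ _ (nbhs_filter x) _ _ _ _ _ _ _ _ (@ccst _ _ x _)); apply: (@cvgN_M _ _ _ (nbhs_filter x)); exact: (@cvg_mulmx _ _ _ (nbhs_filter x) _ _ _ _ _ _ _ (@ccst _ _ x y) cUm).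
have cD : D u @[u --> x] --> (0 : 'rV[C]_n).
  have -> : (0 : 'rV[C]_n) = 1^-1 *: (0 *m Z *m \adj 1%:M) by rewrite !mul0mx scaler0.
  apply: (@cvgZ_M _ _ _ (nbhs_filter x)); first exact: (@cvgV_C _ _ _ (nbhs_filter x) _ _ (oner_neq0 _) cgd).
  apply: (@cvg_mulmx _ _ _ (nbhs_filter x)); first exact: (@cvg_mulmx _ _ _ (nbhs_filter x) _ _ _ _ _ _ _ cr (@ccst _ _ x Z)).
  exact: (@cvg_adj _ _ _ (nbhs_filter x) _ _ _ cG).
have cW : Wf u @[u --> x] --> rv_wedge a b.
  rewrite -Exy -[y in rv_wedge x y]addr0.
  exact: (@cvg_wedge _ _ _ (nbhs_filter x) _ _ _ _ _ cvg_id (@cvgD_M _ _ _ (nbhs_filter x) _ _ _ _ _ _ (@ccst _ _ x y) cD)).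
have N1 : \forall u \near x, Piso (Wf u) := cW _ Hiso.
have N2 : \forall u \near x, Wf u != 0 := @cvg_neq0_M _ _ _ (nbhs_filter x) _ _ _ _ Hab cW.
have N3 : \forall u \near x, gd u != 0 := @cvg_neq0_C _ _ _ (nbhs_filter x) _ _ (oner_neq0 _) cgd.
apply: filterS (filterI N1 (filterI N2 N3)) => u [P1 [P2 P3]] [Ru u0].
have NoKer (c : 'rV[C]_n) : rv_Kperp K (rv_wedge u c) -> c 0 p = 0 -> c 0 q = 0 -> c = 0.
  move=> Kc cp cq.
  have cY0 : c *m Y u = 0.
    by rewrite /Y mul_mx_row (proj1 (Kperp_Um Kskew _ _) Kc) (mulE2_0 cp cq) row_mx0.
  have : c *m G u *m \adj (G u) = 0 by rewrite /G mulmxA cY0 !mul0mx.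
  rewrite -mulmxA mul_mx_adj mul_mx_scalar => /eqP; rewrite scaler_eq0 (negbTE P3) /=.
  by move/eqP.
case: Ru => [[z [Kz z0]] | u00]; last by rewrite u00 eqxx in u0.
have Pc s t : rv_Kperp K (rv_wedge u (s *: u + t *: z)).
  rewrite wedge_linr wedgevv scaler0 add0r; exact: KperpZ.
have d0 := delta_nz NoKer Pc z0 u0.
have [y'p y'q] := cramer y d0.
set y' := _ *: u + _ *: z in y'p y'q.
have Ky' : rv_Kperp K (rv_wedge u y') by exact: Pc.
have dY : (y' - y) *m Y u = r u.
  rewrite /Y mul_mx_row mulmxBl (proj1 (Kperp_Um Kskew _ _) Ky') sub0r.
  by rewrite (mulE2_0 (v := y' - y)) // mxE ?y'p ?y'q mxE subrr.
have dD : y' - y = D u.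
  have : (y' - y) *m G u *m \adj (G u) = r u *m Z *m \adj (G u) by rewrite /G mulmxA dY.
  rewrite -mulmxA mul_mx_adj mul_mx_scalar => Hd.
  by rewrite /D -Hd scalerA (mulVf P3) scale1r.
have EW : Wf u = rv_wedge u y' by rewrite /Wf -dD addrC subrK.
have [t Ht] : exists t : C, Wf u = t *: rv_wedge a b.
  apply: P1; split; first by rewrite EW.
  split; last exact: P2.
  by exists u, (y + D u).
have t0 : t != 0 by apply: contra P2 => /eqP t00; rewrite Ht t00 scale0r.
apply: (rows_span (v := y') _ Hpq t0); by rewrite -EW.
Qed.

Lemma closed_lemma x : ~ inS x -> \forall u \near x, ~ inS u.
Proof.
move=> nSx.
have cw1 : rv_wedge u b p q @[u --> x] --> rv_wedge x b p q.
  apply: (@mx_cvg_entry _ _ _ (nbhs_filter x)).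
  exact: (@cvg_wedge _ _ _ (nbhs_filter x) _ _ _ _ _ cvg_id (@ccst _ _ x b)).
have cw2 : rv_wedge a u p q @[u --> x] --> rv_wedge a x p q.
  apply: (@mx_cvg_entry _ _ _ (nbhs_filter x)).
  exact: (@cvg_wedge _ _ _ (nbhs_filter x) _ _ _ _ _ (@ccst _ _ x a) cvg_id).
have cg : gfun a b p q u @[u --> x] --> gfun a b p q x.
  rewrite /gfun.
  apply: (@cvgD_M _ _ _ (nbhs_filter x)); last first.
    apply: (@cvgN_M _ _ _ (nbhs_filter x)).
    exact: (@cvgZ_M _ _ _ (nbhs_filter x) _ _ _ _ _ _ cw2 (@ccst _ _ x b)).
  apply: (@cvgD_M _ _ _ (nbhs_filter x)); last first.
    apply: (@cvgN_M _ _ _ (nbhs_filter x)).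
    exact: (@cvgZ_M _ _ _ (nbhs_filter x) _ _ _ _ _ _ cw1 (@ccst _ _ x a)).
  exact: (@cvgZ_M _ _ _ (nbhs_filter x) _ _ _ _ _ _ (@ccst _ _ x _) cvg_id).
have gx : gfun a b p q x != 0 by apply/negP => /eqP /(gfun_zero Hpq).
apply: filterS (@cvg_neq0_M _ _ _ (nbhs_filter x) _ _ _ _ gx cg) => u gu Su.
by move/eqP: gu; apply; apply: gfun_inS.
Qed.

Local Notation Sset := (rv_span2 a b `\` [set 0]).

Lemma SsetP v : Sset v <-> inS v /\ v != 0.
Proof.
split.
  by move=> [/= /span2P Sv /eqP v0].
by move=> [Sv v0]; split; [exact/span2P | exact/eqP].
Qed.

Lemma seg_cc u v : Sset u -> Sset v ->
  (forall r : R, u + ((r%:C)%C : C) *: (v - u) != 0) -> connected_component Sset u v.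
Proof.
move=> Su Sv Hnz.
pose phi (r : R) := u + ((r%:C)%C : C) *: (v - u).
have cphi : continuous phi.
  move=> r0; apply: (@cvgD_M _ _ _ (nbhs_filter r0)); first exact: (@ccst _ _ r0 u).
  exact: (@cvgZ_M _ _ _ (nbhs_filter r0) _ _ _ _ _ _ (@cont_RC _ r0) (@ccst _ _ r0 _)).
exists (phi @` `[0%R, 1%R]); last first.
  exists 1%R; first by rewrite /= in_itv /= lexx ler01.
  have e1 : ((1:R)%:C)%C = 1 :> C by [].
  by rewrite /phi e1 scale1r addrC subrK.
split.
- exists 0%R; first by rewrite /= in_itv /= lexx ler01.
  have e0 : ((0:R)%:C)%C = 0 :> C by [].
  by rewrite /phi e0 scale0r addr0.
- move=> w [r _ <-]; apply/SsetP; split; last exact: Hnz.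
  have [Su' _] := proj1 (SsetP u) Su; have [Sv' _] := proj1 (SsetP v) Sv.
  have := inS_lin (1 - (r%:C)%C) ((r%:C)%C) Su' Sv'.
  have -> : (1 - (r%:C)%C) *: u + (r%:C)%C *: v = phi r.
    by rewrite /phi scalerBl scale1r scalerBr addrCA addrC.
  done.
- apply: connected_continuous_connected; first exact: segment_connected.
  exact: continuous_subspaceT.
Qed.

Lemma Sset_conn : connected Sset.
Proof.
have aS : Sset a.
  apply/SsetP; split; first by exists 1, 0; rewrite scale1r scale0r addr0.
  by apply: contra Hab => /eqP ->; rewrite wedge0l.
have bS : Sset b.
  apply/SsetP; split; first by exists 0, 1; rewrite scale1r scale0r add0r.
  by apply: contra Hab => /eqP ->; rewrite wedge0r.
suff -> : Sset = connected_component Sset a by exact: component_connected.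
apply/seteqP; split; last exact: connected_component_sub.
move=> v Sv; have [[s [t Ev]] v0] := proj1 (SsetP v) Sv.
have [t0|t0] := eqVneq t 0.
  have s0 : s != 0 by apply: contra v0 => /eqP s0; rewrite Ev s0 t0 !scale0r addr0.
  apply: (connected_component_trans (y := b)).
    by apply: seg_cc => // r; apply: seg_nz2.
  by apply: seg_cc => // r; rewrite Ev t0; apply: seg_nz3.
by apply: seg_cc => // r; rewrite Ev; apply: seg_nz1.
Qed.

End Main.

End PilotAux.
Import PilotAux.

Theorem proposition2p6 (R : realType) (n : nat) (K : {vspace 'M[R[i]]_n})
  (a b : 'rV[R[i]]_n) :
  (forall k, k \in K -> rv_skew k) ->
  rv_Kperp K (rv_wedge a b) -> rv_wedge a b != 0 ->
  (* [a /\ b] is an isolated point of P K^perp \cap Gr_2(V^\vee) *)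
  (\forall w \near rv_wedge a b,
      (rv_Kperp K w /\ (exists c d, w = rv_wedge c d) /\ w != 0) ->
      exists t : R[i], w = t *: rv_wedge a b) ->
  (* l_ab is a connected component of P R(V,K) *)
  connected_component (rv_resonance K `\` [set 0]) a = rv_span2 a b `\` [set 0]
  (* and <a,b> is rv_isotropic *)
  /\ rv_isotropic K (rv_span2 a b).
Proof.
move=> Kskew HabK Hab Hiso.
have [p [q Hpq]] := nz_mx Hab.
split; last first.
  move=> x y /span2P Sx /span2P Sy; have [mu ->] := wedge_inS Sx Sy; exact: KperpZ.
set A := rv_resonance K `\` [set 0].
set S := rv_span2 a b `\` [set 0].
have SA : S `<=` A.
  move=> v /SsetP [Sv v0]; split; last by move=> /= v00; rewrite v00 eqxx in v0.
  left; have [y _ Exy] := exists_y Sv v0; exists y; by rewrite Exy.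
have aS : S a.
  apply/SsetP; split; first by exists 1, 0; rewrite scale1r scale0r addr0.
  by apply: contra Hab => /eqP ->; rewrite wedge0l.
have sep : separated S (A `\` S).
  split.
    apply/seteqP; split => // v [clv [Av nSv]].
    have nSv' : ~ inS a b v.
      move=> Sv; apply: nSv; apply/SsetP; split => //.
      by apply/eqP => v0; case: Av => _; apply.
    have [w [Sw Nw]] := clv _ (closed_lemma Hpq nSv').
    by apply: Nw; case: (proj1 (SsetP a b w) Sw).
  apply/seteqP; split => // v [Sv clv].
  have [Sv' v0] := proj1 (SsetP a b v) Sv.
  have [w [[Aw nSw] Nw]] := clv _ (open_lemma Kskew HabK Hab Hiso Hpq Sv' v0).
  apply: nSw; apply/SsetP; split.
    apply: Nw; split; first by case: Aw.
    by apply/eqP => w0; case: Aw => _; apply.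
  by apply/eqP => w0; case: Aw => _; apply.
apply/seteqP; split.
  have cov : connected_component A a `<=` S `|` (A `\` S).
    move=> v Hv; have Av := connected_component_sub Hv.
    by case: (pselect (S v)) => Sv; [left | right].
  case: (connected_subset sep cov (@component_connected _ A a)) => // H.
  exfalso; have := H a (connected_component_refl (SA a aS)); by case=> _; apply.
exact: (connected_component_max aS SA (Sset_conn Hab)).
Qed.
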